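(* Let $T>0$. Let $g:\mathbb{R}\to\mathbb{R}$ be a continuous, odd, sublinear function, and let $k:\mathbb{R}\to\mathbb{R}$ be a continuous, odd, $T$-periodic function with $\frac{1}{T}\int_0^T k(t)\,dt=0$. Then the equation $$u''+g(u)=k(t)$$ has an odd $T$-periodic solution $u\in C^2(\mathbb{R})$. Moreover, the set of odd $T$-periodic solutions of this equation is bounded in the supremum norm.
   Context: A function $h$ is odd if $h(-x)=-h(x)$ for all $x$. The function $g$ is called sublinear if for every $\varepsilon>0$ there exists $M=M(\varepsilon)>0$ such that $|g(x)|\le M+\varepsilon|x|$ for all $x\in\mathbb{R}$. *)

(* Defs.v *)
From Stdlib Require Import Reals.
From Coquelicot Require Import Coquelicot.
Open Scope R_scope.

Definition odd_fun (h : R -> R) : Prop := forall x, h (- x) = - h x.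

Definition sublinear (g : R -> R) : Prop :=
  forall eps, 0 < eps -> exists M, 0 < M /\ forall x, Rabs (g x) <= M + eps * Rabs x.

Definition periodic (T : R) (h : R -> R) : Prop := forall t, h (t + T) = h t.

Definition is_C2_solution (g k u : R -> R) : Prop :=
  (forall t, ex_derive u t) /\
  (forall t, ex_derive (Derive u) t) /\
  (forall t, continuous (Derive (Derive u)) t) /\
  (forall t, Derive (Derive u) t + g (u t) = k t).

Definition is_solution (g k u : R -> R) : Prop :=
  (forall t, ex_derive u t) /\
  (forall t, ex_derive (Derive u) t) /\
  (forall t, Derive (Derive u) t + g (u t) = k t).

(* Main.v *)
From Stdlib Require Import Reals ZArith Lra Lia ClassicalEpsilon Classical.
Require Import Defs.
From Coquelicot Require Import Coquelicot.
Open Scope R_scope.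

Lemma le_lim_eta (X Y C e0 : R) : 0 < e0 ->
  (forall eta, 0 < eta <= e0 -> X <= Y + C * eta) -> X <= Y.
Proof.
  intros He H.
  destruct (Rle_dec X Y) as [h|h]; [exact h|].
  exfalso. set (C' := Rabs C + 1).
  assert (HC' : 0 < C') by (unfold C'; pose proof (Rabs_pos C); lra).
  set (eta := Rmin e0 ((X - Y) / (2 * C'))).
  assert (Heta : 0 < eta). { unfold eta. apply Rmin_pos; [lra|]. apply Rdiv_lt_0_compat; lra. }
  assert (Heta2 : eta <= (X - Y) / (2 * C')) by apply Rmin_r.
  specialize (H eta (conj Heta (Rmin_l _ _))).
  assert (C * eta <= C' * eta). { apply Rmult_le_compat_r; [lra|]. unfold C'; pose proof (Rle_abs C); lra. }
  assert (C' * eta <= (X - Y)/2). { apply Rmult_le_compat_l with (r:=C') in Heta2; [|lra].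
    replace (C' * ((X - Y) / (2 * C'))) with ((X-Y)/2) in Heta2 by (field; lra). lra. }
  lra.
Qed.

Lemma deriv_eps (f : R -> R) (x l : R) :
  (forall eps, 0 < eps -> exists d, 0 < d /\ forall y, Rabs (y - x) < d ->
      Rabs (f y - f x - (y - x) * l) <= eps * Rabs (y - x)) ->
  is_derive f x l.
Proof.
  intros H. apply is_derive_Reals. intros eps Heps.
  destruct (H (eps/2) ltac:(lra)) as [d [Hd Hf]].
  exists (mkposreal d Hd). intros hh Hh0 Hhd. simpl in Hhd.
  specialize (Hf (x + hh)). replace (x + hh - x) with hh in Hf by ring.
  specialize (Hf Hhd).
  replace ((f (x + hh) - f x) / hh - l) with ((f (x+hh) - f x - hh * l) / hh) by (field; auto).
  rewrite Rabs_div by auto.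
  assert (Ha : 0 < Rabs hh) by (apply Rabs_pos_lt; auto).
  apply Rle_lt_trans with (eps/2); [|lra].
  apply Rmult_le_reg_r with (Rabs hh); auto.
  unfold Rdiv at 1. rewrite Rmult_assoc, Rinv_l by lra. lra.
Qed.

Lemma nat_large (c : R) : exists p : nat, c < INR p.
Proof.
  destruct (nfloor_ex (Rmax c 0) (Rmax_r _ _)) as [n [h1 h2]].
  exists (S n). rewrite S_INR. pose proof (Rmax_l c 0). lra.
Qed.

Lemma pow2_ge (p : nat) : INR p <= 2 ^ p.
Proof.
  induction p. simpl; lra.
  rewrite S_INR. simpl. assert (1 <= 2 ^ p) by (apply pow_R1_Rle; lra). lra.
Qed.

Definition infS (P : nat -> Prop) := forall N, exists n, (N <= n)%nat /\ P n.

Lemma inf_split P Q : infS P -> infS (fun n => P n /\ Q n) \/ infS (fun n => P n /\ ~ Q n).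
Proof.
  intros H. destruct (classic (infS (fun n => P n /\ Q n))) as [h|h]; [left; auto|right].
  unfold infS in h. apply not_all_ex_not in h. destruct h as [N1 h1].
  intros N. destruct (H (max N N1)) as [n [hn hs]]. exists n. split; [lia|]. split; auto.
  intro hp. apply h1. exists n. split; [lia|auto].
Qed.

Lemma inf_ge P N0 : infS P -> infS (fun n => P n /\ (N0 <= n)%nat).
Proof.
  intros H N. destruct (H (max N N0)) as [n [? ?]]. exists n; repeat split; auto; lia.
Qed.

Lemma refine_point (x : nat -> R) (a b : R) P : infS P -> (forall n, P n -> a <= x n <= b) ->
  forall p, exists P', (forall n, P' n -> P n) /\ infS P' /\
     exists a', forall n, P' n -> a' <= x n <= a' + (b - a) / 2 ^ p.
Proof.
  intros HS Hx p. induction p.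
  - exists P. split; auto. split; auto. exists a. intros n hn. simpl.
    specialize (Hx n hn). replace ((b-a)/1) with (b-a) by field. lra.
  - destruct IHp as [S1 [h1 [h2 [a1 h3]]]].
    assert (hp : 0 < 2 ^ p) by (apply pow_lt; lra).
    set (w := (b - a) / 2 ^ p).
    assert (hw : (b - a) / 2 ^ S p = w / 2) by (unfold w; simpl; field; lra).
    rewrite hw.
    destruct (inf_split S1 (fun n => x n <= a1 + w/2) h2) as [hl|hr].
    + exists (fun n => S1 n /\ x n <= a1 + w/2). split. intros n [? ?]; auto. split; auto.
      exists a1. intros n [hn hx]. specialize (h3 n hn). fold w in h3. lra.
    + exists (fun n => S1 n /\ ~ x n <= a1 + w/2). split. intros n [? ?]; auto. split; auto.
      exists (a1 + w/2). intros n [hn hx]. specialize (h3 n hn). fold w in h3. lra.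
Qed.

Lemma refine_delta (x : nat -> R) (B d : R) P : 0 < d -> infS P -> (forall n, P n -> Rabs (x n) <= B) ->
  exists P', (forall n, P' n -> P n) /\ infS P' /\ forall n m, P' n -> P' m -> Rabs (x n - x m) <= d.
Proof.
  intros hd HS Hx.
  destruct (nat_large ((B - - B) / d)) as [p hp].
  destruct (refine_point x (-B) B P HS) with (p := p) as [P' [h1 [h2 [a h3]]]].
  { intros n hn. specialize (Hx n hn). apply Rabs_le_between; auto. }
  exists P'. split; auto. split; auto. intros n m hn hm.
  pose proof (h3 n hn). pose proof (h3 m hm).
  assert ((B - - B) / 2 ^ p <= d).
  { pose proof (pow2_ge p). assert (hp2 : 0 < 2^p) by (apply pow_lt; lra).
    apply Rmult_le_reg_r with (2^p); auto. unfold Rdiv. rewrite Rmult_assoc, Rinv_l by lra.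
    apply Rmult_lt_compat_r with (r := d) in hp; auto. unfold Rdiv in hp.
    rewrite Rmult_assoc, Rinv_l in hp by lra. nra. }
  apply Rabs_le_between. lra.
Qed.

Definition closeP (F : nat -> R -> R) (P : nat -> Prop) (d : R) :=
  forall n m, P n -> P m -> forall t, Rabs (F n t - F m t) <= d.

Lemma refine_grid (F : nat -> R -> R) (B rho d : R) : 0 < d ->
  (forall n t, Rabs (F n t) <= B) ->
  forall J P, infS P -> exists P', (forall n, P' n -> P n) /\ infS P' /\
    forall n m, P' n -> P' m -> forall j, (j <= J)%nat -> Rabs (F n (INR j * rho) - F m (INR j * rho)) <= d.
Proof.
  intros hd HB J. induction J; intros P HP.
  - destruct (refine_delta (fun n => F n (INR 0 * rho)) B d P hd HP) as [P' [h1 [h2 h3]]].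
    { intros; auto. }
    exists P'. split; auto. split; auto. intros n m hn hm j hj. assert (j = 0%nat) by lia. subst. auto.
  - destruct (IHJ P HP) as [P1 [h1 [h2 h3]]].
    destruct (refine_delta (fun n => F n (INR (S J) * rho)) B d P1 hd h2) as [P' [h4 [h5 h6]]].
    { intros; auto. }
    exists P'. split; auto. split; auto. intros n m hn hm j hj.
    destruct (Nat.eq_dec j (S J)). subst; auto. apply h3; auto. lia.
Qed.

Lemma grid_cover (rho : R) : 0 < rho -> forall J r, 0 <= r <= INR J * rho ->
  exists j, (j <= J)%nat /\ Rabs (r - INR j * rho) <= rho.
Proof.
  intros hr J. induction J; intros r H.
  - exists 0%nat. split; auto. simpl in *. rewrite Rabs_right; lra.
  - destruct (Rle_dec r (INR J * rho)).
    + destruct (IHJ r ltac:(lra)) as [j [? ?]]. exists j. split; auto.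
    + exists (S J). split; auto. rewrite S_INR in *. apply Rabs_le_between. lra.
Qed.

Lemma refine_unif (F : nat -> R -> R) (B K T : R) : 0 < T -> 0 <= K ->
  (forall n t, Rabs (F n t) <= B) ->
  (forall eta, 0 < eta -> exists N0, forall n, (N0 <= n)%nat -> forall t t',
      Rabs (F n t - F n t') <= K * Rabs (t - t') + eta) ->
  (forall t, exists r, 0 <= r <= T /\ forall n, F n t = F n r) ->
  forall d, 0 < d -> forall P, infS P -> exists P', (forall n, P' n -> P n) /\ infS P' /\ closeP F P' d.
Proof.
  intros hT hK HB HL HR d hd P HP.
  set (rho := d / (6 * (K + 1))).
  assert (hrho : 0 < rho) by (unfold rho; apply Rdiv_lt_0_compat; lra).
  assert (hKrho : K * rho <= d / 6).
  { unfold rho. apply Rmult_le_reg_r with (6 * (K+1)); [lra|].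
    replace (K * (d / (6 * (K + 1))) * (6 * (K + 1))) with (K * d) by (field; lra).
    replace (d / 6 * (6 * (K + 1))) with (K * d + d) by field. lra. }
  destruct (HL (d/6) ltac:(lra)) as [N0 HN0].
  destruct (nat_large (T / rho)) as [J hJ].
  assert (hJ' : T <= INR J * rho).
  { apply Rmult_lt_compat_r with (r := rho) in hJ; auto. unfold Rdiv in hJ.
    rewrite Rmult_assoc, Rinv_l in hJ by lra. lra. }
  destruct (refine_grid F B rho (d/3) ltac:(lra) HB J _ (inf_ge P N0 HP)) as [P' [h1 [h2 h3]]].
  exists P'. split. intros n hn. apply h1; auto. split; auto.
  intros n m hn hm t.
  destruct (HR t) as [r [hr1 hr2]]. rewrite !hr2.
  destruct (grid_cover rho hrho J r ltac:(lra)) as [j [hj1 hj2]].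
  pose proof (h3 n m hn hm j hj1).
  destruct (h1 n hn) as [_ hnN]. destruct (h1 m hm) as [_ hmN].
  pose proof (HN0 n hnN r (INR j * rho)). pose proof (HN0 m hmN (INR j * rho) r).
  rewrite Rabs_minus_sym in hj2.
  assert (K * Rabs (r - INR j * rho) <= d/6).
  { apply Rle_trans with (K * rho); auto. apply Rmult_le_compat_l; auto. rewrite Rabs_minus_sym; auto. }
  assert (K * Rabs (INR j * rho - r) <= d/6).
  { apply Rle_trans with (K * rho); auto. apply Rmult_le_compat_l; auto. }
  replace (F n r - F m r) with ((F n r - F n (INR j * rho)) + (F n (INR j * rho) - F m (INR j * rho)) + (F m (INR j * rho) - F m r)) by ring.
  eapply Rle_trans. apply Rabs_triang. eapply Rle_trans. apply Rplus_le_compat_r. apply Rabs_triang.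
  lra.
Qed.
Definition refine_step (F : nat -> R -> R) (P : nat -> Prop) (j : nat) : nat -> Prop :=
  epsilon (inhabits (fun _ : nat => True))
    (fun P' => (forall n, P' n -> P n) /\ infS P' /\ closeP F P' (/ INR (S j))).

Fixpoint seqS (F : nat -> R -> R) (P0 : nat -> Prop) (j : nat) : nat -> Prop :=
  match j with 0 => P0 | S j' => refine_step F (seqS F P0 j') j' end.

Fixpoint nj (F : nat -> R -> R) (P0 : nat -> Prop) (j : nat) : nat :=
  match j with
  | 0 => epsilon (inhabits 0%nat) (fun n => seqS F P0 1 n)
  | S j' => epsilon (inhabits 0%nat) (fun n => (S (nj F P0 j') <= n)%nat /\ seqS F P0 (S (S j')) n)
  end.

Lemma diag (F : nat -> R -> R) :
  (forall d, 0 < d -> forall P, infS P -> exists P', (forall n, P' n -> P n) /\ infS P' /\ closeP F P' d) ->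
  forall P0, infS P0 -> exists P', (forall n, P' n -> P0 n) /\ infS P' /\
    exists u : R -> R, forall d, 0 < d -> exists N, forall n, (N <= n)%nat -> P' n ->
       forall t, Rabs (F n t - u t) <= d.
Proof.
  intros HU P0 HP0.
  assert (Hstep : forall j, infS (seqS F P0 j) ->
     (forall n, seqS F P0 (S j) n -> seqS F P0 j n) /\ infS (seqS F P0 (S j)) /\
     closeP F (seqS F P0 (S j)) (/ INR (S j))).
  { intros j hj. simpl. unfold refine_step. apply epsilon_spec.
    apply HU; auto. apply Rinv_0_lt_compat. apply lt_0_INR; lia. }
  assert (Hinf : forall j, infS (seqS F P0 j)).
  { induction j. simpl; auto. apply Hstep; auto. }
  assert (Hmono : forall d j n, seqS F P0 (d + j) n -> seqS F P0 j n).
  { induction d; intros j n h. auto. apply IHd. apply (Hstep (d + j)%nat (Hinf _)). exact h. }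
  assert (Hnj : forall j, seqS F P0 (S j) (nj F P0 j) /\ (S (nj F P0 j) <= nj F P0 (S j))%nat /\ seqS F P0 (S (S j)) (nj F P0 (S j))).
  { induction j.
    - assert (h0 : seqS F P0 1 (nj F P0 0)).
      { simpl nj. apply epsilon_spec. destruct (Hinf 1%nat 0%nat) as [n [_ hn]]. eauto. }
      split; auto.
      assert (h1 : (S (nj F P0 0) <= nj F P0 1)%nat /\ seqS F P0 2 (nj F P0 1)).
      { change (nj F P0 1) with (epsilon (inhabits 0%nat) (fun n => (S (nj F P0 0) <= n)%nat /\ seqS F P0 2 n)).
        apply epsilon_spec. apply (Hinf 2%nat). }
      tauto.
    - destruct IHj as [_ [_ h]]. split; auto.
      assert (h1 : (S (nj F P0 (S j)) <= nj F P0 (S (S j)))%nat /\ seqS F P0 (S (S (S j))) (nj F P0 (S (S j)))).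
      { change (nj F P0 (S (S j))) with (epsilon (inhabits 0%nat) (fun n => (S (nj F P0 (S j)) <= n)%nat /\ seqS F P0 (S (S (S j))) n)).
        apply epsilon_spec. apply Hinf. }
      tauto. }
  assert (Hinc : forall j d, (nj F P0 j + d <= nj F P0 (d + j))%nat).
  { intros j d. induction d. rewrite Nat.add_0_r. change (0 + j)%nat with j. lia. pose proof (proj1 (proj2 (Hnj (d + j)%nat))). change (S d + j)%nat with (S (d + j)). lia. }
  assert (Hinc2 : forall j j', (nj F P0 j <= nj F P0 j')%nat -> (j <= j')%nat).
  { intros j j' h. destruct (Nat.le_gt_cases j j') as [h1|h1]; auto.
    pose proof (Hinc j' (j - j')%nat). replace (j - j' + j')%nat with j in H by lia.
    pose proof (Hinc j' 0%nat). simpl in H0. lia. }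
  assert (Hge : forall j, (j <= nj F P0 j)%nat).
  { intros j. pose proof (Hinc 0%nat j). rewrite Nat.add_0_r in H. lia. }
  assert (Hcl : forall j j', (j <= j')%nat -> forall t, Rabs (F (nj F P0 j) t - F (nj F P0 j') t) <= / INR (S j)).
  { intros j j' hjj t. destruct (Hstep j (Hinf j)) as [_ [_ hc]]. apply hc.
    apply Hnj. replace (S j') with ((j' - j) + S j)%nat by lia. apply Hmono with (d := (j' - j)%nat).
    replace (j' - j + S j)%nat with (S j') by lia. apply Hnj. }
  assert (Hsmall : forall e, 0 < e -> exists J, forall j, (J <= j)%nat -> / INR (S j) < e).
  { intros e he. destruct (nat_large (/ e)) as [J hJ]. exists J. intros j hj.
    assert (INR J <= INR j) by (apply le_INR; auto).
    rewrite S_INR. apply Rmult_lt_reg_r with (INR j + 1). pose proof (pos_INR j); lra.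
    rewrite Rinv_l by (pose proof (pos_INR j); lra).
    apply Rmult_lt_reg_l with (/ e). apply Rinv_0_lt_compat; auto.
    rewrite <- Rmult_assoc, Rinv_l, Rmult_1_l, Rmult_1_r by lra. lra. }
  set (u := fun t => epsilon (inhabits 0) (fun l => Un_cv (fun j => F (nj F P0 j) t) l)).
  assert (Hu : forall t, Un_cv (fun j => F (nj F P0 j) t) (u t)).
  { intros t. unfold u. apply epsilon_spec.
    destruct (Rcomplete.R_complete (fun j => F (nj F P0 j) t)) as [l hl]; eauto.
    intros e he. destruct (Hsmall e he) as [J hJ]. exists J. intros n m hn hm.
    unfold R_dist. destruct (Nat.le_gt_cases n m).
    - eapply Rle_lt_trans. apply Hcl; auto. apply hJ; auto.
    - rewrite Rabs_minus_sym. eapply Rle_lt_trans. apply Hcl; lia. apply hJ; auto. }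
  assert (Hbd : forall j t, Rabs (F (nj F P0 j) t - u t) <= / INR (S j)).
  { intros j t. apply le_lim_eta with (C := 1) (e0 := 1); [lra|]. intros eta [he1 he2].
    destruct (Hu t eta he1) as [N hN]. specialize (hN (max N j) (Nat.le_max_l _ _)).
    unfold R_dist in hN. pose proof (Hcl j (max N j) (Nat.le_max_r _ _) t).
    replace (F (nj F P0 j) t - u t) with ((F (nj F P0 j) t - F (nj F P0 (max N j)) t) + (F (nj F P0 (max N j)) t - u t)) by ring.
    eapply Rle_trans. apply Rabs_triang. lra. }
  exists (fun n => exists j, n = nj F P0 j). split.
  { intros n [j ->]. pose proof (Hmono (S j) 0%nat (nj F P0 j)) as hm.
    rewrite Nat.add_0_r in hm. exact (hm (proj1 (Hnj j))). }
  split.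
  { intros N. exists (nj F P0 N). split; eauto. }
  exists u. intros d hd. destruct (Hsmall d hd) as [J hJ]. exists (nj F P0 J).
  intros n hn [j ->] t. apply Hinc2 in hn. eapply Rle_trans. apply Hbd. left. apply hJ; auto.
Qed.
Open Scope R_scope.

Lemma IZR_of_nat (m : nat) : IZR (Z.of_nat m) = INR m.
Proof. symmetry; apply INR_IZR_INZ. Qed.

Lemma Z_cases_nat (i i0 : Z) : (exists m : nat, i = (i0 + Z.of_nat m)%Z) \/ (exists m : nat, i = (i0 - Z.of_nat m)%Z).
Proof.
  destruct (Z.le_gt_cases i0 i).
  - left. exists (Z.to_nat (i - i0)). rewrite Z2Nat.id; lia.
  - right. exists (Z.to_nat (i0 - i)). rewrite Z2Nat.id; lia.
Qed.

Lemma lip_Z (X : Z -> R) (c : R) : (forall z, Rabs (X (z + 1)%Z - X z) <= c) ->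
  forall i j, Rabs (X i - X j) <= Rabs (IZR (i - j)) * c.
Proof.
  intros H.
  assert (Hf : forall m z, Rabs (X (z + Z.of_nat m)%Z - X z) <= INR m * c).
  { induction m; intros z. simpl. rewrite Z.add_0_r. unfold Rminus. rewrite Rplus_opp_r, Rabs_R0. lra.
    rewrite Nat2Z.inj_succ, S_INR. replace (z + Z.succ (Z.of_nat m))%Z with ((z + Z.of_nat m) + 1)%Z by lia.
    specialize (IHm z). specialize (H (z + Z.of_nat m)%Z).
    replace (X (z + Z.of_nat m + 1)%Z - X z) with ((X (z + Z.of_nat m + 1)%Z - X (z + Z.of_nat m)%Z) + (X (z + Z.of_nat m)%Z - X z)) by ring.
    eapply Rle_trans. apply Rabs_triang. lra. }
  intros i j. destruct (Z_cases_nat i j) as [[m ->]|[m ->]].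
  - replace (j + Z.of_nat m - j)%Z with (Z.of_nat m) by lia. rewrite IZR_of_nat, (Rabs_right (INR m)) by (apply Rle_ge, pos_INR). auto.
  - replace (j - Z.of_nat m - j)%Z with (- Z.of_nat m)%Z by lia. rewrite opp_IZR, Rabs_Ropp, IZR_of_nat, (Rabs_right (INR m)) by (apply Rle_ge, pos_INR).
    rewrite Rabs_minus_sym. specialize (Hf m (j - Z.of_nat m)%Z). replace (j - Z.of_nat m + Z.of_nat m)%Z with j in Hf by lia. auto.
Qed.

Lemma taylor1 (X Y : Z -> R) (h c : R) : 0 <= h -> 0 <= c ->
  (forall z, X (z + 1)%Z - X z = h * Y z) ->
  (forall z, Rabs (Y (z + 1)%Z - Y z) <= h * c) ->
  forall i i0, Rabs (X i - X i0 - IZR (i - i0) * h * Y i0) <= c * (IZR (i - i0) * h) ^ 2.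
Proof.
  intros hh hc HX HY.
  pose proof (lip_Z Y (h * c) HY) as LY.
  intros i i0. destruct (Z_cases_nat i i0) as [[m ->]|[m ->]].
  - replace (i0 + Z.of_nat m - i0)%Z with (Z.of_nat m) by lia. rewrite IZR_of_nat.
    induction m. simpl. rewrite Z.add_0_r. replace (X i0 - X i0 - 0 * h * Y i0) with 0 by ring. rewrite Rabs_R0. nra.
    rewrite Nat2Z.inj_succ, S_INR. replace (i0 + Z.succ (Z.of_nat m))%Z with ((i0 + Z.of_nat m) + 1)%Z by lia.
    specialize (HX (i0 + Z.of_nat m)%Z). specialize (LY (i0 + Z.of_nat m)%Z i0).
    replace (i0 + Z.of_nat m - i0)%Z with (Z.of_nat m) in LY by lia. rewrite IZR_of_nat, (Rabs_right (INR m)) in LY by (apply Rle_ge, pos_INR).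
    replace (X (i0 + Z.of_nat m + 1)%Z - X i0 - (INR m + 1) * h * Y i0) with
      ((X (i0 + Z.of_nat m)%Z - X i0 - INR m * h * Y i0) + h * (Y (i0 + Z.of_nat m)%Z - Y i0)) by lra.
    eapply Rle_trans. apply Rabs_triang. rewrite Rabs_mult, (Rabs_right h) by lra.
    pose proof (pos_INR m).
    assert (h * Rabs (Y (i0 + Z.of_nat m)%Z - Y i0) <= h * (INR m * (h * c))) by (apply Rmult_le_compat_l; auto).
    assert (0 <= h * h * c) by (apply Rmult_le_pos; [nra|auto]).
    nra.
  - replace (i0 - Z.of_nat m - i0)%Z with (- Z.of_nat m)%Z by lia. rewrite opp_IZR, IZR_of_nat.
    induction m. simpl. rewrite Z.sub_0_r. replace (X i0 - X i0 - - 0 * h * Y i0) with 0 by ring. rewrite Rabs_R0. nra.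
    rewrite Nat2Z.inj_succ, S_INR. replace (i0 - Z.succ (Z.of_nat m))%Z with ((i0 - Z.of_nat m) - 1)%Z by lia.
    specialize (HX (i0 - Z.of_nat m - 1)%Z). replace (i0 - Z.of_nat m - 1 + 1)%Z with (i0 - Z.of_nat m)%Z in HX by lia.
    specialize (LY (i0 - Z.of_nat m - 1)%Z i0).
    replace (i0 - Z.of_nat m - 1 - i0)%Z with (- Z.of_nat (S m))%Z in LY by lia. rewrite opp_IZR, Rabs_Ropp, IZR_of_nat, S_INR, (Rabs_right (INR m + 1)) in LY by (pose proof (pos_INR m); lra).
    replace (X (i0 - Z.of_nat m - 1)%Z - X i0 - - (INR m + 1) * h * Y i0) with
      ((X (i0 - Z.of_nat m)%Z - X i0 - - INR m * h * Y i0) - h * (Y (i0 - Z.of_nat m - 1)%Z - Y i0)) by (lra).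
    eapply Rle_trans. apply Rabs_triang. rewrite Rabs_Ropp, Rabs_mult, (Rabs_right h) by lra.
    pose proof (pos_INR m).
    assert (h * Rabs (Y (i0 - Z.of_nat m - 1)%Z - Y i0) <= h * ((INR m + 1) * (h * c))) by (apply Rmult_le_compat_l; auto).
    assert (0 <= h * h * c) by (apply Rmult_le_pos; [nra|auto]).
    nra.
Qed.

Lemma taylor2 (Y W : Z -> R) (h phi eps : R) (i i0 : Z) : 0 <= h ->
  (forall z, Y (z + 1)%Z - Y z = h * W (z + 1)%Z) ->
  (forall j, (Z.abs (j - i0) <= Z.abs (i - i0))%Z -> Rabs (W j - phi) <= eps) ->
  Rabs (Y i - Y i0 - IZR (i - i0) * h * phi) <= Rabs (IZR (i - i0)) * h * eps.
Proof.
  intros hh HY HW.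
  destruct (Z_cases_nat i i0) as [[M ->]|[M ->]].
  - replace (i0 + Z.of_nat M - i0)%Z with (Z.of_nat M) in * by lia. rewrite IZR_of_nat, (Rabs_right (INR M)) by (apply Rle_ge, pos_INR).
    assert (forall m, (m <= M)%nat -> Rabs (Y (i0 + Z.of_nat m)%Z - Y i0 - INR m * h * phi) <= INR m * h * eps).
    { induction m; intros hm. simpl. rewrite Z.add_0_r. replace (Y i0 - Y i0 - 0 * h * phi) with 0 by ring. rewrite Rabs_R0. lra.
      rewrite Nat2Z.inj_succ, S_INR. replace (i0 + Z.succ (Z.of_nat m))%Z with ((i0 + Z.of_nat m) + 1)%Z by lia.
      specialize (HY (i0 + Z.of_nat m)%Z). specialize (IHm ltac:(lia)).
      specialize (HW (i0 + Z.of_nat m + 1)%Z ltac:(lia)).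
      replace (Y (i0 + Z.of_nat m + 1)%Z - Y i0 - (INR m + 1) * h * phi) with
        ((Y (i0 + Z.of_nat m)%Z - Y i0 - INR m * h * phi) + h * (W (i0 + Z.of_nat m + 1)%Z - phi)) by lra.
      eapply Rle_trans. apply Rabs_triang. rewrite Rabs_mult, (Rabs_right h) by lra.
      assert (h * Rabs (W (i0 + Z.of_nat m + 1)%Z - phi) <= h * eps) by (apply Rmult_le_compat_l; auto).
      lra. }
    apply H; auto.
  - replace (i0 - Z.of_nat M - i0)%Z with (- Z.of_nat M)%Z in * by lia. rewrite opp_IZR, Rabs_Ropp, IZR_of_nat, (Rabs_right (INR M)) by (apply Rle_ge, pos_INR).
    assert (forall m, (m <= M)%nat -> Rabs (Y (i0 - Z.of_nat m)%Z - Y i0 - - INR m * h * phi) <= INR m * h * eps).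
    { induction m; intros hm. simpl. rewrite Z.sub_0_r. replace (Y i0 - Y i0 - - 0 * h * phi) with 0 by ring. rewrite Rabs_R0. lra.
      rewrite Nat2Z.inj_succ, S_INR. replace (i0 - Z.succ (Z.of_nat m))%Z with ((i0 - Z.of_nat m) - 1)%Z by lia.
      specialize (HY (i0 - Z.of_nat m - 1)%Z). replace (i0 - Z.of_nat m - 1 + 1)%Z with (i0 - Z.of_nat m)%Z in HY by lia.
      specialize (IHm ltac:(lia)).
      specialize (HW (i0 - Z.of_nat m)%Z ltac:(lia)).
      replace (Y (i0 - Z.of_nat m - 1)%Z - Y i0 - - (INR m + 1) * h * phi) with
        ((Y (i0 - Z.of_nat m)%Z - Y i0 - - INR m * h * phi) - h * (W (i0 - Z.of_nat m)%Z - phi)) by (lra).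
      eapply Rle_trans. apply Rabs_triang. rewrite Rabs_Ropp, Rabs_mult, (Rabs_right h) by lra.
      assert (h * Rabs (W (i0 - Z.of_nat m)%Z - phi) <= h * eps) by (apply Rmult_le_compat_l; auto).
      lra. }
    replace (- INR M * h * phi) with (- INR M * h * phi) by ring. apply H; auto.
Qed.
Definition stepP (k g : R -> R) (h : R) (p : R * R) (i : nat) : R * R :=
  (snd p, 2 * snd p - fst p + h * h * (k (INR (S i) * h) - g (snd p))).
Fixpoint Pseq (k g : R -> R) (h s : R) (i : nat) : R * R :=
  match i with O => (0, s * h) | S i' => stepP k g h (Pseq k g h s i') i' end.
Definition Un k g h s i := fst (Pseq k g h s i).

Lemma Un_0 k g h s : Un k g h s 0 = 0.
Proof. reflexivity. Qed.
Lemma Un_1 k g h s : Un k g h s 1 = s * h.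
Proof. reflexivity. Qed.
Lemma Un_rec k g h s m : Un k g h s (S (S m)) - 2 * Un k g h s (S m) + Un k g h s m =
   h * h * (k (INR (S m) * h) - g (Un k g h s (S m))).
Proof. unfold Un. simpl. ring. Qed.

Lemma Un_cont k g h : (forall x, continuous g x) ->
  forall i, continuity (fun s => fst (Pseq k g h s i)) /\ continuity (fun s => snd (Pseq k g h s i)).
Proof.
  intros Hg. induction i.
  - simpl. split. apply continuity_const. intros ? ?; auto.
    apply continuity_mult. apply derivable_continuous, derivable_id. apply continuity_const. intros ? ?; auto.
  - destruct IHi as [h1 h2]. simpl. split; auto.
    apply continuity_plus. apply continuity_minus. apply continuity_mult; auto. apply continuity_const. intros ? ?; auto.
    auto. apply continuity_mult. apply continuity_const. intros ? ?; auto.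
    apply continuity_minus. apply continuity_const. intros ? ?; auto.
    intros x. apply continuity_pt_comp. apply h2. apply continuity_pt_filterlim. apply Hg.
Qed.

Fixpoint mx (a : nat -> R) (i : nat) : R :=
  match i with O => Rabs (a 0%nat) | S i' => Rmax (mx a i') (Rabs (a (S i'))) end.

Lemma mx_ge a n : forall i, (i <= n)%nat -> Rabs (a i) <= mx a n.
Proof.
  induction n; intros i hi. assert (i = 0%nat) by lia. subst. simpl. lra.
  simpl. destruct (Nat.eq_dec i (S n)). subst. apply Rmax_r. eapply Rle_trans. apply IHn. lia. apply Rmax_l.
Qed.

Lemma mx_le a n X : (forall i, (i <= n)%nat -> Rabs (a i) <= X) -> mx a n <= X.
Proof.
  induction n; intros H. simpl. apply H; lia. simpl. apply Rmax_lub. apply IHn. intros; apply H; lia. apply H; lia.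
Qed.

Lemma shoot_est (k g : R -> R) (L K0 M eps : R) (N : nat) (s : R) :
  0 < L -> (1 <= N)%nat -> 0 <= eps -> eps * (L * L) <= / 4 ->
  (forall t, Rabs (k t) <= K0) -> (forall x, Rabs (g x) <= M + eps * Rabs x) ->
  let h := L / INR N in
  let m := mx (Un k g h s) N in
  Rabs (Un k g h s N - L * s) <= L * L * (K0 + M) + m / 4 /\
  m <= L * Rabs s + L * L * (K0 + M) + m / 4.
Proof.
  intros hL hN he heL Hk Hg h m.
  assert (hNpos : 0 < INR N) by (apply lt_0_INR; lia).
  assert (hh : 0 < h) by (unfold h; apply Rdiv_lt_0_compat; auto).
  assert (hNh : INR N * h = L) by (unfold h; field; lra).
  set (F := K0 + M + eps * m).
  assert (hm0 : 0 <= m) by (eapply Rle_trans; [apply Rabs_pos| apply (mx_ge _ N 0%nat); lia]).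
  assert (Hf : forall i, (i <= N)%nat -> Rabs (k (INR i * h) - g (Un k g h s i)) <= F).
  { intros i hi. unfold F. pose proof (Hk (INR i * h)). pose proof (Hg (Un k g h s i)).
    pose proof (mx_ge (Un k g h s) N i hi). fold m in H1.
    assert (eps * Rabs (Un k g h s i) <= eps * m) by (apply Rmult_le_compat_l; auto).
    eapply Rle_trans. apply Rabs_triang. rewrite Rabs_Ropp. lra. }
  assert (Q : forall i, (i <= N)%nat -> Rabs (Un k g h s i - INR i * h * s) <= INR i * INR i * (h * h) * F /\
                        Rabs (Un k g h s (S i) - Un k g h s i - h * s) <= INR i * (h * h) * F).
  { induction i; intros hi.
    - rewrite Un_0, Un_1. simpl. replace (0 - 0 * h * s) with 0 by ring. replace (s * h - 0 - h * s) with 0 by ring.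
      rewrite Rabs_R0. lra.
    - destruct (IHi ltac:(lia)) as [h1 h2]. specialize (Hf (S i) hi).
      pose proof (Un_rec k g h s i).
      assert (0 <= F) by (eapply Rle_trans; [apply Rabs_pos|exact Hf]).
      rewrite S_INR. pose proof (pos_INR i). split.
      + replace (Un k g h s (S i) - (INR i + 1) * h * s) with ((Un k g h s i - INR i * h * s) + (Un k g h s (S i) - Un k g h s i - h * s)) by ring.
        eapply Rle_trans. apply Rabs_triang.
        assert (0 <= h * h * F) by (apply Rmult_le_pos; [nra|auto]). nra.
      + replace (Un k g h s (S (S i)) - Un k g h s (S i) - h * s) with
          ((Un k g h s (S i) - Un k g h s i - h * s) + h * h * (k (INR (S i) * h) - g (Un k g h s (S i)))) by lra.
        eapply Rle_trans. apply Rabs_triang. rewrite Rabs_mult. rewrite (Rabs_right (h*h)) by nra.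
        assert (h * h * Rabs (k (INR (S i) * h) - g (Un k g h s (S i))) <= h * h * F) by (apply Rmult_le_compat_l; [nra|auto]).
        lra. }
  assert (hF : 0 <= F) by (eapply Rle_trans; [apply Rabs_pos| apply (Hf 0%nat); lia]).
  assert (Hb : forall i, (i <= N)%nat -> Rabs (Un k g h s i - INR i * h * s) <= L * L * F).
  { intros i hi. destruct (Q i hi) as [h1 _]. eapply Rle_trans. apply h1.
    assert (INR i <= INR N) by (apply le_INR; auto). pose proof (pos_INR i).
    assert (INR i * h <= L) by nra. assert (0 <= INR i * h) by nra.
    replace (INR i * INR i * (h * h) * F) with ((INR i * h) * (INR i * h) * F) by ring.
    apply Rmult_le_compat_r; auto. nra. }
  assert (HeF : L * L * F = L * L * (K0 + M) + eps * (L * L) * m) by (unfold F; ring).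
  assert (eps * (L * L) * m <= m / 4) by nra.
  split.
  - pose proof (Hb N (le_n _)) as HbN. replace (INR N * h * s) with (L * s) in HbN by (rewrite <- hNh; ring).
    lra.
  - apply mx_le. intros i hi. pose proof (Hb i hi).
    assert (INR i <= INR N) by (apply le_INR; auto). pose proof (pos_INR i).
    assert (Rabs (INR i * h * s) <= L * Rabs s).
    { rewrite Rabs_mult, (Rabs_right (INR i * h)) by nra. apply Rmult_le_compat_r. apply Rabs_pos. nra. }
    pose proof (Rabs_triang_inv (Un k g h s i) (INR i * h * s)). fold m. lra.
Qed.
Lemma shoot_zero (k g : R -> R) (L K0 M eps : R) (N : nat) :
  0 < L -> (1 <= N)%nat -> 0 <= eps -> eps * (L * L) <= / 4 ->
  (forall x, continuous g x) ->
  (forall t, Rabs (k t) <= K0) -> (forall x, Rabs (g x) <= M + eps * Rabs x) ->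
  exists s, Un k g (L / INR N) s N = 0 /\ L * Rabs s <= 2 * (L * L * (K0 + M)) /\
     forall i, (i <= N)%nat -> Rabs (Un k g (L / INR N) s i) <= 4 * (L * L * (K0 + M)).
Proof.
  intros hL hN he heL Hgc Hk Hg.
  set (A := L * L * (K0 + M)).
  assert (hA : 0 <= A).
  { unfold A. pose proof (Rabs_pos (k 0)). pose proof (Hk 0). pose proof (Hg 0). rewrite Rabs_R0 in H1.
    pose proof (Rabs_pos (g 0)). apply Rmult_le_pos; nra. }
  set (S0 := (2 * A + 1) / L).
  assert (hS0 : L * S0 = 2 * A + 1) by (unfold S0; field; lra).
  assert (hS0p : 0 < S0) by (unfold S0; apply Rdiv_lt_0_compat; lra).
  set (f := fun s => Un k g (L / INR N) s N).
  assert (hc : continuity f) by (apply (Un_cont k g (L / INR N) Hgc N)).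
  assert (hp : 0 < f S0).
  { destruct (shoot_est k g L K0 M eps N S0 hL hN he heL Hk Hg) as [h1 h2].
    fold A in h1, h2. unfold f. set (m := mx _ _) in *.
    rewrite Rabs_right in h2 by lra. apply Rabs_le_between in h1. lra. }
  assert (hn : f (- S0) < 0).
  { destruct (shoot_est k g L K0 M eps N (- S0) hL hN he heL Hk Hg) as [h1 h2].
    fold A in h1, h2. unfold f. set (m := mx _ _) in *.
    rewrite Rabs_Ropp, Rabs_right in h2 by lra. apply Rabs_le_between in h1. lra. }
  assert (hprod : f (- S0) * f S0 <= 0).
  { pose proof (Rmult_lt_compat_r (f S0) (f (-S0)) 0 hp hn). rewrite Rmult_0_l in H. lra. }
  destruct (IVT_cor f (- S0) S0 hc ltac:(lra) hprod) as [s [_ hs]].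
  exists s. destruct (shoot_est k g L K0 M eps N s hL hN he heL Hk Hg) as [h1 h2].
  fold A in h1, h2. unfold f in hs. set (m := mx _ _) in *. rewrite hs in h1.
  replace (0 - L * s) with (- (L * s)) in h1 by ring. rewrite Rabs_Ropp, Rabs_mult, (Rabs_right L) in h1 by lra.
  split; auto. split. lra. intros i hi. eapply Rle_trans. apply (mx_ge _ N i hi). fold m. lra.
Qed.

Definition UZ k g h s (z : Z) : R :=
  match z with Z0 => 0 | Zpos p => Un k g h s (Pos.to_nat p) | Zneg p => - Un k g h s (Pos.to_nat p) end.

Lemma UZ_nat k g h s n : UZ k g h s (Z.of_nat n) = Un k g h s n.
Proof. destruct n. reflexivity. simpl. rewrite SuccNat2Pos.id_succ. reflexivity. Qed.

Lemma UZ_opp k g h s z : UZ k g h s (- z) = - UZ k g h s z.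
Proof. destruct z; simpl; ring. Qed.

Lemma UZ_rec k g h s : odd_fun k -> odd_fun g -> forall z,
  UZ k g h s (z + 1) - 2 * UZ k g h s z + UZ k g h s (z - 1) = h * h * (k (IZR z * h) - g (UZ k g h s z)).
Proof.
  intros Hk Hg.
  assert (k0 : k 0 = 0). { pose proof (Hk 0). rewrite Ropp_0 in H. lra. }
  assert (g0 : g 0 = 0). { pose proof (Hg 0). rewrite Ropp_0 in H. lra. }
  assert (Hpos : forall m : nat, UZ k g h s (Z.of_nat (S m) + 1) - 2 * UZ k g h s (Z.of_nat (S m)) + UZ k g h s (Z.of_nat (S m) - 1)
      = h * h * (k (IZR (Z.of_nat (S m)) * h) - g (UZ k g h s (Z.of_nat (S m))))).
  { intros m. replace (Z.of_nat (S m) + 1)%Z with (Z.of_nat (S (S m))) by lia.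
    replace (Z.of_nat (S m) - 1)%Z with (Z.of_nat m) by lia. rewrite !UZ_nat, IZR_of_nat. apply Un_rec. }
  intros z. destruct (Z.lt_trichotomy z 0) as [hz|[hz|hz]].
  - set (w := (- z)%Z). assert (hw : (0 < w)%Z) by (unfold w; lia).
    replace z with (- Z.of_nat (S (Z.to_nat w - 1)))%Z by (unfold w; lia).
    set (m := (Z.to_nat w - 1)%nat).
    replace (- Z.of_nat (S m) + 1)%Z with (- (Z.of_nat (S m) - 1))%Z by lia.
    replace (- Z.of_nat (S m) - 1)%Z with (- (Z.of_nat (S m) + 1))%Z by lia.
    rewrite !UZ_opp, opp_IZR, Ropp_mult_distr_l_reverse, Hk, Hg. pose proof (Hpos m). lra.
  - subst. simpl. unfold Un. simpl. rewrite Rmult_0_l, k0, g0. ring.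
  - replace z with (Z.of_nat (S (Z.to_nat z - 1))) by lia. apply Hpos.
Qed.
Lemma per_mult (X : Z -> R) (p : Z) : (forall z, X (z + p)%Z = X z) -> forall q z, X (z + p * q)%Z = X z.
Proof.
  intros H.
  assert (Hn : forall n : nat, forall z, X (z + p * Z.of_nat n)%Z = X z).
  { induction n; intros z. rewrite Z.mul_0_r, Z.add_0_r. auto.
    replace (z + p * Z.of_nat (S n))%Z with ((z + p * Z.of_nat n) + p)%Z by lia. rewrite H. auto. }
  intros q z. destruct (Z.le_gt_cases 0 q).
  - replace q with (Z.of_nat (Z.to_nat q)) by lia. auto.
  - rewrite <- (Hn (Z.to_nat (- q)) (z + p * q)%Z). f_equal. lia.
Qed.

Lemma reduce_Z (X : Z -> R) (p : Z) : (0 < p)%Z -> (forall z, X (z + p)%Z = X z) ->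
  forall z, exists r, (0 <= r < p)%Z /\ X z = X r.
Proof.
  intros hp H z. exists (z mod p)%Z. split. apply Z.mod_pos_bound; auto.
  rewrite (Z.div_mod z p) at 1 by lia. rewrite Z.add_comm. apply per_mult; auto.
Qed.


Lemma U_sym (k g : R -> R) (U : Z -> R) (h : R) (N : nat) :
  odd_fun k -> odd_fun g -> (forall t, k (t + 2 * (INR N * h)) = k t) ->
  (forall z, U (z + 1)%Z - 2 * U z + U (z - 1)%Z = h * h * (k (IZR z * h) - g (U z))) ->
  U (Z.of_nat N) = 0 ->
  forall j : nat, U (Z.of_nat N + Z.of_nat j)%Z = - U (Z.of_nat N - Z.of_nat j)%Z.
Proof.
  intros Hk Hg Hkp HR HN.
  set (L := INR N * h).
  assert (g0 : g 0 = 0). { pose proof (Hg 0). rewrite Ropp_0 in H. lra. }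
  assert (kL : forall x, k (L + x) = - k (L - x)).
  { intros x. replace (L + x) with ((x - L) + 2 * (INR N * h)) by (unfold L; ring). rewrite Hkp.
    rewrite <- Hk. f_equal. ring. }
  assert (P2 : forall j, U (Z.of_nat N + Z.of_nat j)%Z = - U (Z.of_nat N - Z.of_nat j)%Z /\
                       U (Z.of_nat N + Z.of_nat (S j))%Z = - U (Z.of_nat N - Z.of_nat (S j))%Z).
  { induction j.
    - split. rewrite Z.add_0_r, Z.sub_0_r, HN. ring.
      pose proof (HR (Z.of_nat N)). rewrite HN, g0 in H. rewrite IZR_of_nat in H. fold L in H.
      replace (L) with (L + 0) in H by ring. rewrite kL in H. replace (L - 0) with L in H by ring.
      assert (k L = 0). { pose proof (kL 0). replace (L + 0) with L in H0 by ring. replace (L - 0) with L in H0 by ring. lra. }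
      rewrite H0 in H. simpl Z.of_nat. lra.
    - destruct IHj as [h1 h2]. split; auto.
      pose proof (HR (Z.of_nat N + Z.of_nat (S j))%Z) as r1.
      pose proof (HR (Z.of_nat N - Z.of_nat (S j))%Z) as r2.
      replace (Z.of_nat N + Z.of_nat (S j) + 1)%Z with (Z.of_nat N + Z.of_nat (S (S j)))%Z in r1 by lia.
      replace (Z.of_nat N + Z.of_nat (S j) - 1)%Z with (Z.of_nat N + Z.of_nat j)%Z in r1 by lia.
      replace (Z.of_nat N - Z.of_nat (S j) + 1)%Z with (Z.of_nat N - Z.of_nat j)%Z in r2 by lia.
      replace (Z.of_nat N - Z.of_nat (S j) - 1)%Z with (Z.of_nat N - Z.of_nat (S (S j)))%Z in r2 by lia.
      rewrite h1, h2 in r1.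
      rewrite plus_IZR, IZR_of_nat, IZR_of_nat in r1. rewrite minus_IZR, IZR_of_nat, IZR_of_nat in r2.
      replace ((INR N + INR (S j)) * h) with (L + INR (S j) * h) in r1 by (unfold L; ring).
      replace ((INR N - INR (S j)) * h) with (L - INR (S j) * h) in r2 by (unfold L; ring).
      rewrite kL in r1. rewrite Hg in r1. lra. }
  intros j; apply P2.
Qed.

Lemma U_per (k g : R -> R) (U : Z -> R) (h : R) (N : nat) :
  odd_fun k -> odd_fun g -> (forall t, k (t + 2 * (INR N * h)) = k t) ->
  (forall z, U (z + 1)%Z - 2 * U z + U (z - 1)%Z = h * h * (k (IZR z * h) - g (U z))) ->
  (forall z, U (- z)%Z = - U z) ->
  U (Z.of_nat N) = 0 ->
  forall z, U (z + 2 * Z.of_nat N)%Z = U z.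
Proof.
  intros Hk Hg Hkp HR HO HN.
  pose proof (U_sym k g U h N Hk Hg Hkp HR HN) as HS.
  assert (A1 : forall z, (- Z.of_nat N <= z)%Z -> U (z + 2 * Z.of_nat N)%Z = U z).
  { intros z hz. pose proof (HS (Z.to_nat (Z.of_nat N + z))). rewrite Z2Nat.id in H by lia.
    replace (Z.of_nat N + (Z.of_nat N + z))%Z with (z + 2 * Z.of_nat N)%Z in H by lia.
    replace (Z.of_nat N - (Z.of_nat N + z))%Z with (- z)%Z in H by lia. rewrite HO in H. lra. }
  intros z. destruct (Z.le_gt_cases (- Z.of_nat N) z). auto.
  pose proof (A1 (- z - 2 * Z.of_nat N)%Z ltac:(lia)).
  replace (- z - 2 * Z.of_nat N + 2 * Z.of_nat N)%Z with (- z)%Z in H0 by lia.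
  replace (- z - 2 * Z.of_nat N)%Z with (- (z + 2 * Z.of_nat N))%Z in H0 by lia.
  rewrite !HO in H0. lra.
Qed.

Lemma U_bound_all (k g : R -> R) (U : Z -> R) (h Bu : R) (N : nat) :
  odd_fun k -> odd_fun g -> (forall t, k (t + 2 * (INR N * h)) = k t) ->
  (1 <= N)%nat ->
  (forall z, U (z + 1)%Z - 2 * U z + U (z - 1)%Z = h * h * (k (IZR z * h) - g (U z))) ->
  (forall z, U (- z)%Z = - U z) ->
  U (Z.of_nat N) = 0 ->
  (forall i : nat, (i <= N)%nat -> Rabs (U (Z.of_nat i)) <= Bu) ->
  forall z, Rabs (U z) <= Bu.
Proof.
  intros Hk Hg Hkp hN HR HO HN HB z.
  pose proof (U_per k g U h N Hk Hg Hkp HR HO HN) as HP.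
  destruct (reduce_Z U (2 * Z.of_nat N) ltac:(lia) HP z) as [r [hr ->]].
  destruct (Z.le_gt_cases r (Z.of_nat N)).
  - replace r with (Z.of_nat (Z.to_nat r)) by lia. apply HB. lia.
  - pose proof (U_sym k g U h N Hk Hg Hkp HR HN (Z.to_nat (r - Z.of_nat N))).
    rewrite Z2Nat.id in H0 by lia. replace (Z.of_nat N + (r - Z.of_nat N))%Z with r in H0 by lia.
    rewrite H0, Rabs_Ropp. replace (Z.of_nat N - (r - Z.of_nat N))%Z with (Z.of_nat (Z.to_nat (2 * Z.of_nat N - r))) by lia.
    apply HB. lia.
Qed.
Lemma disc_pkg (k g : R -> R) (L K0 M eps : R) (N : nat) :
  0 < L -> (1 <= N)%nat -> 0 <= eps -> eps * (L * L) <= / 4 ->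
  (forall x, continuous g x) ->
  (forall t, Rabs (k t) <= K0) -> (forall x, Rabs (g x) <= M + eps * Rabs x) ->
  odd_fun k -> odd_fun g -> (forall t, k (t + 2 * L) = k t) ->
  let h := L / INR N in
  let A := L * L * (K0 + M) in
  exists U : Z -> R,
    (forall z, U (z + 1)%Z - 2 * U z + U (z - 1)%Z = h * h * (k (IZR z * h) - g (U z))) /\
    (forall z, U (- z)%Z = - U z) /\
    (forall z, U (z + 2 * Z.of_nat N)%Z = U z) /\
    (forall z, Rabs (U z) <= 4 * A) /\
    (forall z, Rabs (U (z + 1)%Z - U z) <= h * (2 * A / L + 2 * L * (K0 + M + eps * (4 * A)))).
Proof.
  intros hL hN he heL Hgc Hk Hg Hko Hgo Hkp h A.
  assert (hNpos : 0 < INR N) by (apply lt_0_INR; lia).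
  assert (hh : 0 < h) by (unfold h; apply Rdiv_lt_0_compat; auto).
  assert (hNh : INR N * h = L) by (unfold h; field; lra).
  destruct (shoot_zero k g L K0 M eps N hL hN he heL Hgc Hk Hg) as [s [hs0 [hsb hUb]]].
  fold h A in hs0, hsb, hUb.
  set (U := UZ k g h s).
  assert (P1 := UZ_rec k g h s Hko Hgo). fold U in P1.
  assert (P2 := UZ_opp k g h s). fold U in P2.
  assert (Hkp' : forall t, k (t + 2 * (INR N * h)) = k t) by (intros; rewrite hNh; auto).
  assert (HN : U (Z.of_nat N) = 0) by (unfold U; rewrite UZ_nat; auto).
  assert (P3 := U_per k g U h N Hko Hgo Hkp' P1 P2 HN).
  assert (P4 : forall z, Rabs (U z) <= 4 * A).
  { apply (U_bound_all k g U h (4 * A) N Hko Hgo Hkp' hN P1 P2 HN).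
    intros i hi. unfold U. rewrite UZ_nat. auto. }
  exists U. split; auto. split; auto. split; auto. split; auto.
  set (Fb := K0 + M + eps * (4 * A)).
  assert (Hf : forall z, Rabs (k (IZR z * h) - g (U z)) <= Fb).
  { intros z. unfold Fb. pose proof (Hk (IZR z * h)). pose proof (Hg (U z)). pose proof (P4 z).
    assert (eps * Rabs (U z) <= eps * (4 * A)) by (apply Rmult_le_compat_l; auto).
    eapply Rle_trans. apply Rabs_triang. rewrite Rabs_Ropp. lra. }
  set (Dl := fun z => U (z + 1)%Z - U z).
  assert (HDP : forall z, Dl (z + 2 * Z.of_nat N)%Z = Dl z).
  { intros z. unfold Dl. replace (z + 2 * Z.of_nat N + 1)%Z with ((z + 1) + 2 * Z.of_nat N)%Z by lia. rewrite !P3. auto. }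
  assert (HDD : forall z, Rabs (Dl (z + 1)%Z - Dl z) <= h * h * Fb).
  { intros z. unfold Dl. pose proof (P1 (z + 1)%Z). replace (z + 1 - 1)%Z with z in H by lia.
    replace (U (z + 1 + 1)%Z - U (z + 1)%Z - (U (z + 1)%Z - U z)) with (h * h * (k (IZR (z + 1) * h) - g (U (z + 1)%Z))) by lra.
    rewrite Rabs_mult, (Rabs_right (h * h)) by nra. apply Rmult_le_compat_l. nra. auto. }
  pose proof (lip_Z Dl (h * h * Fb) HDD) as LD.
  assert (D0 : Dl 0%Z = s * h) by (unfold Dl, U; simpl; unfold Un; simpl; ring).
  assert (hs : Rabs s <= 2 * A / L).
  { apply Rmult_le_reg_l with L; auto. replace (L * (2 * A / L)) with (2 * A) by (field; lra). auto. }
  assert (hFb : 0 <= Fb) by (eapply Rle_trans; [apply Rabs_pos|apply (Hf 0%Z)]).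
  intros z. fold (Dl z).
  destruct (reduce_Z Dl (2 * Z.of_nat N) ltac:(lia) HDP z) as [r [hr ->]].
  pose proof (LD r 0%Z). rewrite Z.sub_0_r, D0 in H.
  assert (Rabs (IZR r) <= 2 * INR N).
  { rewrite Rabs_right by (apply Rle_ge, IZR_le; lia). rewrite INR_IZR_INZ. replace 2 with (IZR 2) by reflexivity.
    rewrite <- mult_IZR. apply IZR_le. lia. }
  assert (Rabs (IZR r) * (h * h * Fb) <= 2 * L * h * Fb).
  { rewrite <- hNh. assert (0 <= h * h * Fb) by (apply Rmult_le_pos; [nra|auto]).
    replace (2 * (INR N * h) * h * Fb) with ((2 * INR N) * (h * h * Fb)) by ring.
    apply Rmult_le_compat_r; auto. }
  assert (Rabs (s * h) <= h * (2 * A / L)).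
  { rewrite Rabs_mult, (Rabs_right h) by lra. rewrite Rmult_comm. apply Rmult_le_compat_l; lra. }
  pose proof (Rabs_triang_inv (Dl r) (s * h)).
  lra.
Qed.
Lemma floor_diff (x y : R) : Rabs (IZR (Zfloor x - Zfloor y)) <= Rabs (x - y) + 1.
Proof.
  pose proof (Zfloor_bound x). pose proof (Zfloor_bound y). rewrite minus_IZR.
  apply Rabs_le_between. split.
  - pose proof (Rle_abs (y - x)). rewrite Rabs_minus_sym in H1. lra.
  - pose proof (Rle_abs (x - y)). lra.
Qed.

Lemma floor_diff_h (t t' h : R) : 0 < h ->
  Rabs (IZR (Zfloor (t / h) - Zfloor (t' / h))) * h <= Rabs (t - t') + h.
Proof.
  intros hh. pose proof (floor_diff (t / h) (t' / h)).
  replace (t / h - t' / h) with ((t - t') / h) in H by (field; lra).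
  rewrite Rabs_div, (Rabs_right h) in H by lra.
  apply Rmult_le_compat_r with (r := h) in H; [|lra].
  replace ((Rabs (t - t') / h + 1) * h) with (Rabs (t - t') + h) in H by (field; lra). auto.
Qed.

Lemma floor_near (t t0 h : R) : 0 < h ->
  Rabs (IZR (Zfloor (t / h) - Zfloor (t0 / h)) * h - (t - t0)) <= h.
Proof.
  intros hh. pose proof (Zfloor_bound (t / h)). pose proof (Zfloor_bound (t0 / h)).
  rewrite minus_IZR. set (a := IZR (Zfloor (t / h))) in *. set (b := IZR (Zfloor (t0 / h))) in *.
  assert (a * h <= t < a * h + h).
  { destruct H as [Ha1 Ha2]. split. apply Rmult_le_compat_r with (r := h) in Ha1; [|lra]. replace (t / h * h) with t in Ha1 by (field; lra). lra.
    apply Rmult_lt_compat_r with (r := h) in Ha2; [|lra]. replace (t / h * h) with t in Ha2 by (field; lra). lra. }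
  assert (b * h <= t0 < b * h + h).
  { destruct H0 as [Hb1 Hb2]. split. apply Rmult_le_compat_r with (r := h) in Hb1; [|lra]. replace (t0 / h * h) with t0 in Hb1 by (field; lra). lra.
    apply Rmult_lt_compat_r with (r := h) in Hb2; [|lra]. replace (t0 / h * h) with t0 in Hb2 by (field; lra). lra. }
  apply Rabs_le_between. lra.
Qed.

Lemma floor_opp_sum (x : R) : Rabs (IZR (Zfloor (- x) + Zfloor x)) <= 1.
Proof.
  pose proof (Zfloor_bound (- x)). pose proof (Zfloor_bound x).
  assert (h1 : (-2 < Zfloor (- x) + Zfloor x)%Z).
  { apply lt_IZR. rewrite plus_IZR. lra. }
  assert (h2 : (Zfloor (- x) + Zfloor x <= 0)%Z).
  { apply Zlt_succ_le. apply lt_IZR. rewrite plus_IZR. unfold Z.succ. rewrite plus_IZR. lra. }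
  assert (Zfloor (- x) + Zfloor x = -1 \/ Zfloor (- x) + Zfloor x = 0)%Z as [e|e] by lia; rewrite e.
  apply Rabs_le_between; lra. apply Rabs_le_between; lra.
Qed.

Lemma per_R_Z (X : R -> R) (p : R) : (forall t, X (t + p) = X t) -> forall z t, X (t + IZR z * p) = X t.
Proof.
  intros H.
  assert (Hn : forall n : nat, forall t, X (t + INR n * p) = X t).
  { induction n; intros t. simpl. rewrite Rmult_0_l, Rplus_0_r; auto.
    rewrite S_INR. replace (t + (INR n + 1) * p) with ((t + INR n * p) + p) by ring. rewrite H; auto. }
  intros z t. destruct (Z.le_gt_cases 0 z).
  - rewrite <- (Z2Nat.id z) by lia. rewrite <- INR_IZR_INZ. auto.
  - rewrite <- (Hn (Z.to_nat (- z)) (t + IZR z * p)). rewrite INR_IZR_INZ, Z2Nat.id by lia. rewrite opp_IZR. f_equal. ring.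
Qed.

Lemma reduce_R (X : R -> R) (p : R) : 0 < p -> (forall t, X (t + p) = X t) ->
  forall t, 0 <= t - IZR (Zfloor (t / p)) * p <= p /\ X t = X (t - IZR (Zfloor (t / p)) * p).
Proof.
  intros hp H t. pose proof (Zfloor_bound (t / p)). split.
  - set (a := IZR (Zfloor (t / p))) in *. split.
    + destruct H0 as [H1 _]. apply Rmult_le_compat_r with (r := p) in H1; [|lra]. replace (t / p * p) with t in H1 by (field; lra). lra.
    + destruct H0 as [_ H0]. apply Rmult_lt_compat_r with (r := p) in H0; [|lra]. replace (t / p * p) with t in H0 by (field; lra). lra.
  - rewrite <- (per_R_Z X p H (Zfloor (t / p)) (t - IZR (Zfloor (t / p)) * p)). f_equal. ring.
Qed.

Lemma h_small (L : R) : forall eta, 0 < eta -> exists N0, forall n, (N0 <= n)%nat -> L / INR (S n) <= eta.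
Proof.
  intros eta he. destruct (nat_large (Rabs L / eta)) as [N0 hN0]. exists N0. intros n hn.
  assert (INR N0 <= INR n) by (apply le_INR; auto). rewrite S_INR.
  assert (0 < INR n + 1) by (pose proof (pos_INR n); lra).
  apply Rmult_le_reg_r with (INR n + 1); auto. replace (L / (INR n + 1) * (INR n + 1)) with L by (field; lra).
  apply Rmult_lt_compat_r with (r := eta) in hN0; auto. replace (Rabs L / eta * eta) with (Rabs L) in hN0 by (field; lra).
  pose proof (Rle_abs L). nra.
Qed.
Lemma cont_eps (f : R -> R) (x : R) : continuous f x ->
  forall eps, 0 < eps -> exists d, 0 < d /\ forall y, Rabs (y - x) < d -> Rabs (f y - f x) < eps.
Proof.
  intros H eps he. apply continuity_pt_filterlim in H.
  destruct (H eps he) as [d [hd Hd]]. exists d. split; auto. intros y hy.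
  destruct (Req_dec y x). subst. unfold Rminus. rewrite Rplus_opp_r, Rabs_R0. auto.
  apply (Hd y). split. split. constructor. auto. exact hy.
Qed.

Lemma floor_h (t h : R) : 0 < h -> Rabs (IZR (Zfloor (t / h)) * h - t) <= h.
Proof.
  intros hh. pose proof (Zfloor_bound (t / h)) as [H1 H2].
  apply Rmult_le_compat_r with (r := h) in H1; [|lra]. replace (t / h * h) with t in H1 by (field; lra).
  apply Rmult_lt_compat_r with (r := h) in H2; [|lra]. replace (t / h * h) with t in H2 by (field; lra).
  apply Rabs_le_between. lra.
Qed.

Lemma extract_step (X : nat -> Z -> R) (L B K : R) :
  0 < L -> 0 <= K ->
  (forall n z, Rabs (X n z) <= B) ->
  (forall n z, Rabs (X n (z + 1)%Z - X n z) <= L / INR (S n) * K) ->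
  (forall n z, X n (z + 2 * Z.of_nat (S n))%Z = X n z) ->
  forall P0, infS P0 -> exists P', (forall n, P' n -> P0 n) /\ infS P' /\
    exists u : R -> R, forall d, 0 < d -> exists N, forall n, (N <= n)%nat -> P' n ->
       forall t, Rabs (X n (Zfloor (t / (L / INR (S n)))) - u t) <= d.
Proof.
  intros hL hK HB HL HP P0 HP0.
  set (hn := fun n => L / INR (S n)).
  assert (hnp : forall n, 0 < hn n) by (intros; unfold hn; apply Rdiv_lt_0_compat; auto; apply lt_0_INR; lia).
  set (F := fun n t => X n (Zfloor (t / hn n))).
  apply (diag F); auto.
  apply (refine_unif F B K (2 * L)); auto.
  - lra.
  - intros n t. apply HB.
  - intros eta he. destruct (h_small L (eta / (K + 1)) ltac:(apply Rdiv_lt_0_compat; lra)) as [N0 hN0].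
    exists N0. intros n hn0 t t'. unfold F.
    pose proof (lip_Z (X n) (hn n * K) (HL n) (Zfloor (t / hn n)) (Zfloor (t' / hn n))).
    pose proof (floor_diff_h t t' (hn n) (hnp n)). specialize (hN0 n hn0). fold (hn n) in hN0.
    assert (hn n * K <= eta).
    { apply Rle_trans with (eta / (K + 1) * K). apply Rmult_le_compat_r; auto.
      apply Rmult_le_reg_r with (K + 1); [lra|]. replace (eta / (K + 1) * K * (K + 1)) with (eta * K) by (field; lra). nra. }
    replace (Rabs (IZR (Zfloor (t / hn n) - Zfloor (t' / hn n))) * (hn n * K)) with
      ((Rabs (IZR (Zfloor (t / hn n) - Zfloor (t' / hn n))) * hn n) * K) in H by ring.
    apply Rmult_le_compat_r with (r := K) in H0; auto. nra.
  - intros t. set (r := t - IZR (Zfloor (t / (2 * L))) * (2 * L)). exists r.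
    assert (HFp : forall n t, F n (t + 2 * L) = F n t).
    { intros n s. unfold F. replace ((s + 2 * L) / hn n) with (s / hn n + IZR (2 * Z.of_nat (S n))).
      rewrite Zfloor_addz. apply HP.
      rewrite mult_IZR, IZR_of_nat. unfold hn. assert (INR (S n) <> 0) by (apply not_0_INR; lia). field; repeat split; try lra; auto. }
    split. apply (reduce_R (F 0%nat) (2 * L) ltac:(lra) (HFp 0%nat) t).
    intros n. apply (reduce_R (F n) (2 * L) ltac:(lra) (HFp n) t).
Qed.
Lemma Rabs_le_0_eq (x : R) : Rabs x <= 0 -> x = 0.
Proof. intros H. apply Rabs_le_between in H. lra. Qed.

Lemma abs4 (a b c e : R) : Rabs (a - b + c + e) <= Rabs a + Rabs b + Rabs c + Rabs e.
Proof.
  eapply Rle_trans. apply Rabs_triang. apply Rplus_le_compat_r.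
  eapply Rle_trans. apply Rabs_triang. apply Rplus_le_compat_r.
  eapply Rle_trans. apply Rabs_triang. rewrite Rabs_Ropp. lra.
Qed.

Lemma limit_sol (k g : R -> R) (L Bu Db Fb : R) (Uf : nat -> Z -> R) :
  0 < L -> 0 <= Db -> 0 <= Fb ->
  (forall x, continuous g x) -> (forall t, continuous k t) ->
  (forall n z, Uf n (z + 1)%Z - 2 * Uf n z + Uf n (z - 1)%Z =
     (L / INR (S n)) * (L / INR (S n)) * (k (IZR z * (L / INR (S n))) - g (Uf n z))) ->
  (forall n z, Uf n (- z)%Z = - Uf n z) ->
  (forall n z, Uf n (z + 2 * Z.of_nat (S n))%Z = Uf n z) ->
  (forall n z, Rabs (Uf n z) <= Bu) ->
  (forall n z, Rabs (Uf n (z + 1)%Z - Uf n z) <= L / INR (S n) * Db) ->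
  (forall n z, Rabs (k (IZR z * (L / INR (S n))) - g (Uf n z)) <= Fb) ->
  exists u, is_C2_solution g k u /\ odd_fun u /\ periodic (2 * L) u.
Proof.
  intros hL hDb hFb Hgc Hkc HR HO HP HB HUl Hf.
  set (hn := fun n => L / INR (S n)).
  assert (hnp : forall n, 0 < hn n) by (intros; unfold hn; apply Rdiv_lt_0_compat; auto; apply lt_0_INR; lia).
  set (Dn := fun n z => (Uf n (z + 1)%Z - Uf n z) / hn n).
  assert (HXY : forall n z, Uf n (z + 1)%Z - Uf n z = hn n * Dn n z).
  { intros. unfold Dn. field. pose proof (hnp n); lra. }
  set (fn := fun n z => k (IZR z * hn n) - g (Uf n z)).
  assert (HDY : forall n z, Dn n (z + 1)%Z - Dn n z = hn n * fn n (z + 1)%Z).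
  { intros n z. unfold Dn, fn. pose proof (HR n (z + 1)%Z). fold (hn n) in H.
    replace (z + 1 - 1)%Z with z in H by lia. pose proof (hnp n).
    apply Rmult_eq_reg_r with (hn n); [|lra].
    replace (((Uf n (z + 1 + 1)%Z - Uf n (z + 1)%Z) / hn n - (Uf n (z + 1)%Z - Uf n z) / hn n) * hn n)
      with (Uf n (z + 1 + 1)%Z - 2 * Uf n (z + 1)%Z + Uf n z) by (field; lra).
    rewrite H. ring. }
  assert (Hfb : forall n z, Rabs (fn n z) <= Fb) by (intros; apply Hf).
  assert (HDl : forall n z, Rabs (Dn n (z + 1)%Z - Dn n z) <= hn n * Fb).
  { intros n z. rewrite HDY, Rabs_mult, (Rabs_right (hn n)) by (apply Rle_ge, Rlt_le, hnp).
    apply Rmult_le_compat_l. left; apply hnp. apply Hfb. }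
  assert (HDb : forall n z, Rabs (Dn n z) <= Db).
  { intros n z. pose proof (HUl n z). rewrite HXY, Rabs_mult, (Rabs_right (hn n)) in H by (apply Rle_ge, Rlt_le, hnp).
    fold (hn n) in H. apply Rmult_le_reg_l with (hn n). apply hnp. auto. }
  assert (HDP : forall n z, Dn n (z + 2 * Z.of_nat (S n))%Z = Dn n z).
  { intros n z. unfold Dn. replace (z + 2 * Z.of_nat (S n) + 1)%Z with ((z + 1) + 2 * Z.of_nat (S n))%Z by lia. rewrite !HP. auto. }
  destruct (extract_step Uf L Bu Db hL hDb HB HUl HP (fun _ => True)) as [P1 [_ [HP1 [u Hu]]]].
  { intros N. exists N. split; auto. }
  assert (HDl' : forall n z, Rabs (Dn n (z + 1)%Z - Dn n z) <= L / INR (S n) * Fb) by exact HDl.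
  destruct (extract_step Dn L Db Fb hL hFb HDb HDl' HDP P1 HP1) as [P2 [HP21 [HP2 [v Hv]]]].
  set (Fn := fun n t => Uf n (Zfloor (t / hn n))).
  set (Gn := fun n t => Dn n (Zfloor (t / hn n))).
  assert (Good : forall eta, 0 < eta -> exists n, (forall t, Rabs (Fn n t - u t) <= eta) /\
                   (forall t, Rabs (Gn n t - v t) <= eta) /\ hn n <= eta).
  { intros eta he. destruct (Hu eta he) as [N1 h1]. destruct (Hv eta he) as [N2 h2].
    destruct (h_small L eta he) as [N3 h3].
    destruct (HP2 (max N1 (max N2 N3))) as [n [hn1 hn2]].
    exists n. split. intros t. apply h1. lia. apply HP21; auto.
    split. intros t. apply h2. lia. auto. apply h3. lia. }
  assert (Du : forall t0 t, Rabs (u t - u t0 - (t - t0) * v t0) <= Fb * (t - t0) ^ 2).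
  { intros t0 t. set (d := t - t0).
    apply le_lim_eta with (C := 2 + Rabs d + Db + Fb * (2 * Rabs d + 1)) (e0 := 1); [lra|].
    intros eta [he1 he2]. destruct (Good eta he1) as [n [g1 [g2 g3]]].
    set (i := Zfloor (t / hn n)). set (i0 := Zfloor (t0 / hn n)).
    pose proof (taylor1 (Uf n) (Dn n) (hn n) Fb (Rlt_le _ _ (hnp n)) hFb (HXY n) (HDl n) i i0) as T1.
    pose proof (floor_near t t0 (hn n) (hnp n)) as FN. fold i i0 d in FN.
    set (a := IZR (i - i0) * hn n) in *.
    assert (ha : Rabs a <= Rabs d + hn n).
    { replace a with ((a - d) + d) by ring. eapply Rle_trans. apply Rabs_triang. lra. }
    assert (ha2 : a ^ 2 <= d ^ 2 + eta * (2 * Rabs d + 1)).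
    { assert (a ^ 2 = Rabs a ^ 2) by (rewrite pow2_abs; auto).
      assert (d ^ 2 = Rabs d ^ 2) by (rewrite pow2_abs; auto).
      rewrite H, H0. pose proof (Rabs_pos a). pose proof (Rabs_pos d).
      assert (Rabs a <= Rabs d + eta) by lra. nra. }
    assert (E1 : Rabs (Fn n t - Fn n t0 - d * Gn n t0) <= Fb * (d ^ 2 + eta * (2 * Rabs d + 1)) + eta * Db).
    { unfold Fn, Gn. fold i i0.
      replace (Uf n i - Uf n i0 - d * Dn n i0) with ((Uf n i - Uf n i0 - a * Dn n i0) + (a - d) * Dn n i0) by ring.
      eapply Rle_trans. apply Rabs_triang. rewrite Rabs_mult.
      assert (Rabs (a - d) * Rabs (Dn n i0) <= eta * Db).
      { apply Rmult_le_compat; try apply Rabs_pos. lra. apply HDb. }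
      assert (Fb * a ^ 2 <= Fb * (d ^ 2 + eta * (2 * Rabs d + 1))) by (apply Rmult_le_compat_l; auto).
      unfold a in *. lra. }
    pose proof (g1 t). pose proof (g1 t0). pose proof (g2 t0).
    assert (Rabs d * Rabs (Gn n t0 - v t0) <= Rabs d * eta) by (apply Rmult_le_compat_l; auto; apply Rabs_pos).
    pose proof (abs4 (Fn n t - Fn n t0 - d * Gn n t0) (Fn n t - u t) (Fn n t0 - u t0) (d * (Gn n t0 - v t0))) as A4.
    rewrite Rabs_mult in A4.
    replace (Fn n t - Fn n t0 - d * Gn n t0 - (Fn n t - u t) + (Fn n t0 - u t0) + d * (Gn n t0 - v t0)) with (u t - u t0 - d * v t0) in A4 by ring.
    nra. }
  assert (Hdu : forall t0, is_derive u t0 (v t0)).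
  { intros t0. apply deriv_eps. intros eps he. exists (eps / (Fb + 1)). split. apply Rdiv_lt_0_compat; lra.
    intros y hy. eapply Rle_trans. apply Du.
    rewrite <- pow2_abs. simpl. rewrite Rmult_1_r.
    assert (Fb * Rabs (y - t0) <= eps).
    { apply Rle_trans with ((Fb + 1) * Rabs (y - t0)). pose proof (Rabs_pos (y - t0)); nra.
      apply Rmult_lt_compat_l with (r := Fb + 1) in hy; [|lra]. replace ((Fb + 1) * (eps / (Fb + 1))) with eps in hy by (field; lra). lra. }
    pose proof (Rabs_pos (y - t0)). nra. }
  assert (Hdv : forall t0, is_derive v t0 (k t0 - g (u t0))).
  { intros t0. set (phi := k t0 - g (u t0)). apply deriv_eps. intros eps he.
    destruct (cont_eps k t0 (Hkc t0) (eps / 2) ltac:(lra)) as [dk [hdk Hdk]].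
    destruct (cont_eps g (u t0) (Hgc (u t0)) (eps / 2) ltac:(lra)) as [dg [hdg Hdg]].
    set (del := Rmin (dk / 2) (dg / (2 * (Db + 1)))).
    assert (hdel : 0 < del) by (unfold del; apply Rmin_pos; apply Rdiv_lt_0_compat; lra).
    exists del. split; auto. intros t ht. set (d := t - t0).
    assert (hd1 : Rabs d < dk / 2) by (eapply Rlt_le_trans; [apply ht|apply Rmin_l]).
    assert (hd2 : Rabs d * Db <= dg / 2).
    { assert (Rabs d <= dg / (2 * (Db + 1))) by (left; eapply Rlt_le_trans; [apply ht|apply Rmin_r]).
      apply Rle_trans with (dg / (2 * (Db + 1)) * Db). apply Rmult_le_compat_r; auto.
      apply Rmult_le_reg_r with (2 * (Db + 1)); [lra|].
      replace (dg / (2 * (Db + 1)) * Db * (2 * (Db + 1))) with (dg * Db) by (field; lra).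
      replace (dg / 2 * (2 * (Db + 1))) with (dg * Db + dg) by field. lra. }
    set (e0 := Rmin 1 (Rmin (dk / 8) (dg / (4 * (Db + 1))))).
    assert (he0 : 0 < e0) by (unfold e0; repeat apply Rmin_pos; try apply Rdiv_lt_0_compat; lra).
    apply le_lim_eta with (C := 2 + eps + Rabs phi) (e0 := e0); auto.
    intros eta [he1 he2].
    assert (heta1 : eta <= dk / 8) by (eapply Rle_trans; [apply he2|]; unfold e0; eapply Rle_trans; [apply Rmin_r|apply Rmin_l]).
    assert (heta2 : eta * (Db + 1) <= dg / 4).
    { assert (eta <= dg / (4 * (Db + 1))) by (eapply Rle_trans; [apply he2|]; unfold e0; eapply Rle_trans; [apply Rmin_r|apply Rmin_r]).
      apply Rmult_le_compat_r with (r := Db + 1) in H; [|lra].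
      replace (dg / (4 * (Db + 1)) * (Db + 1)) with (dg / 4) in H by (field; lra). auto. }
    destruct (Good eta he1) as [n [g1 [g2 g3]]].
    set (i := Zfloor (t / hn n)). set (i0 := Zfloor (t0 / hn n)).
    pose proof (floor_near t t0 (hn n) (hnp n)) as FN. fold i i0 d in FN.
    pose proof (floor_h t0 (hn n) (hnp n)) as FH. fold i0 in FH.
    assert (Hw : forall j, (Z.abs (j - i0) <= Z.abs (i - i0))%Z -> Rabs (fn n j - phi) <= eps).
    { intros j hj.
      assert (hj' : Rabs (IZR (j - i0)) <= Rabs (IZR (i - i0))).
      { rewrite <- !abs_IZR. apply IZR_le. auto. }
      assert (hai : Rabs (IZR (i - i0)) * hn n <= Rabs d + hn n).
      { replace (Rabs (IZR (i - i0)) * hn n) with (Rabs (IZR (i - i0) * hn n)) by (rewrite Rabs_mult, (Rabs_right (hn n)); auto; apply Rle_ge, Rlt_le, hnp).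
        replace (IZR (i - i0) * hn n) with ((IZR (i - i0) * hn n - d) + d) by ring.
        eapply Rle_trans. apply Rabs_triang. lra. }
      assert (haj : Rabs (IZR (j - i0)) * hn n <= Rabs d + hn n).
      { eapply Rle_trans; [|apply hai]. apply Rmult_le_compat_r; auto. left; apply hnp. }
      unfold fn, phi.
      assert (A1 : Rabs (k (IZR j * hn n) - k t0) < eps / 2).
      { apply Hdk. replace (IZR j * hn n - t0) with (IZR (j - i0) * hn n + (IZR i0 * hn n - t0)) by (rewrite minus_IZR; ring).
        eapply Rle_lt_trans. apply Rabs_triang. rewrite Rabs_mult, (Rabs_right (hn n)) by (apply Rle_ge, Rlt_le, hnp). lra. }
      assert (A2 : Rabs (g (Uf n j) - g (u t0)) < eps / 2).
      { apply Hdg. pose proof (lip_Z (Uf n) (hn n * Db) (HUl n) j i0) as LU.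
        pose proof (g1 t0) as G1. unfold Fn in G1. fold i0 in G1.
        replace (Uf n j - u t0) with ((Uf n j - Uf n i0) + (Uf n i0 - u t0)) by ring.
        eapply Rle_lt_trans. apply Rabs_triang.
        assert (Rabs (IZR (j - i0)) * (hn n * Db) <= (Rabs d + hn n) * Db).
        { replace (Rabs (IZR (j - i0)) * (hn n * Db)) with ((Rabs (IZR (j - i0)) * hn n) * Db) by ring.
          apply Rmult_le_compat_r; auto. }
        nra. }
      replace (k (IZR j * hn n) - g (Uf n j) - (k t0 - g (u t0))) with ((k (IZR j * hn n) - k t0) - (g (Uf n j) - g (u t0))) by ring.
      eapply Rle_trans. apply Rabs_triang. rewrite Rabs_Ropp. lra. }
    pose proof (taylor2 (Dn n) (fn n) (hn n) phi eps i i0 (Rlt_le _ _ (hnp n)) (HDY n) Hw) as T2.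
    set (a := IZR (i - i0) * hn n) in *.
    assert (ha : Rabs (IZR (i - i0)) * hn n <= Rabs d + eta).
    { replace (Rabs (IZR (i - i0)) * hn n) with (Rabs a) by (unfold a; rewrite Rabs_mult, (Rabs_right (hn n)); auto; apply Rle_ge, Rlt_le, hnp).
      replace a with ((a - d) + d) by ring. eapply Rle_trans. apply Rabs_triang. lra. }
    assert (E1 : Rabs (Gn n t - Gn n t0 - d * phi) <= (Rabs d + eta) * eps + eta * Rabs phi).
    { unfold Gn. fold i i0.
      replace (Dn n i - Dn n i0 - d * phi) with ((Dn n i - Dn n i0 - a * phi) + (a - d) * phi) by ring.
      eapply Rle_trans. apply Rabs_triang. rewrite Rabs_mult.
      assert (Rabs (a - d) * Rabs phi <= eta * Rabs phi) by (apply Rmult_le_compat_r; [apply Rabs_pos|lra]).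
      assert (Rabs (IZR (i - i0)) * hn n * eps <= (Rabs d + eta) * eps) by (apply Rmult_le_compat_r; lra).
      lra. }
    pose proof (g2 t). pose proof (g2 t0).
    pose proof (abs4 (Gn n t - Gn n t0 - d * phi) (Gn n t - v t) (Gn n t0 - v t0) 0) as A4.
    rewrite Rabs_R0 in A4.
    replace (Gn n t - Gn n t0 - d * phi - (Gn n t - v t) + (Gn n t0 - v t0) + 0) with (v t - v t0 - d * phi) in A4 by ring.
    assert ((Rabs d + eta) * eps = eps * Rabs d + eps * eta) by ring. nra. }
  assert (Hodd : odd_fun u).
  { intros t. apply Rminus_diag_uniq. apply Rabs_le_0_eq.
    apply le_lim_eta with (C := 2 + Db) (e0 := 1); [lra|]. intros eta [he1 he2].
    destruct (Good eta he1) as [n [g1 [g2 g3]]].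
    pose proof (g1 t). pose proof (g1 (- t)).
    assert (Rabs (Fn n (- t) + Fn n t) <= eta * Db).
    { unfold Fn. replace (- t / hn n) with (- (t / hn n)) by (field; pose proof (hnp n); lra).
      pose proof (lip_Z (Uf n) (hn n * Db) (HUl n) (Zfloor (- (t / hn n))) (- Zfloor (t / hn n))%Z).
      rewrite HO in H1. replace (Zfloor (- (t / hn n)) - - Zfloor (t / hn n))%Z with (Zfloor (- (t / hn n)) + Zfloor (t / hn n))%Z in H1 by lia.
      pose proof (floor_opp_sum (t / hn n)).
      replace (Uf n (Zfloor (- (t / hn n))) + Uf n (Zfloor (t / hn n))) with (Uf n (Zfloor (- (t / hn n))) - - Uf n (Zfloor (t / hn n))) by ring.
      eapply Rle_trans. apply H1. apply Rle_trans with (1 * (hn n * Db)). apply Rmult_le_compat_r; auto.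
      apply Rmult_le_pos; auto. left; apply hnp. nra. }
    replace (u (- t) - - u t) with ((Fn n (- t) + Fn n t) - (Fn n (- t) - u (- t)) - (Fn n t - u t)) by ring.
    eapply Rle_trans. apply Rabs_triang. eapply Rle_trans. apply Rplus_le_compat_r. apply Rabs_triang.
    rewrite !Rabs_Ropp. lra. }
  assert (Hper : periodic (2 * L) u).
  { intros t. apply Rminus_diag_uniq. apply Rabs_le_0_eq.
    apply le_lim_eta with (C := 2) (e0 := 1); [lra|]. intros eta [he1 he2].
    destruct (Good eta he1) as [n [g1 [g2 g3]]].
    pose proof (g1 t). pose proof (g1 (t + 2 * L)).
    assert (Fn n (t + 2 * L) = Fn n t).
    { unfold Fn. replace ((t + 2 * L) / hn n) with (t / hn n + IZR (2 * Z.of_nat (S n))).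
      rewrite Zfloor_addz. apply HP.
      rewrite mult_IZR, IZR_of_nat. unfold hn. assert (INR (S n) <> 0) by (apply not_0_INR; lia). field; repeat split; try lra; auto. }
    replace (u (t + 2 * L) - u t) with (- (Fn n (t + 2 * L) - u (t + 2 * L)) + (Fn n t - u t)) by (rewrite H1; ring).
    eapply Rle_trans. apply Rabs_triang. rewrite Rabs_Ropp. lra. }
  exists u. split; [|split; auto].
  assert (HDu : forall t, Derive u t = v t) by (intros; apply is_derive_unique; auto).
  assert (HDDu : forall t, Derive (Derive u) t = k t - g (u t)).
  { intros t. rewrite (Derive_ext (Derive u) v t HDu). apply is_derive_unique; auto. }
  assert (Hucont : forall t, continuity_pt u t).
  { intros t. apply derivable_continuous_pt. exists (v t). apply is_derive_Reals. auto. }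
  split; [|split; [|split]].
  - intros t. exists (v t); auto.
  - intros t. apply ex_derive_ext with v. intros; rewrite HDu; auto. exists (k t - g (u t)); auto.
  - intros t. apply continuous_ext with (fun y => k y - g (u y)). intros; rewrite HDDu; auto.
    apply continuity_pt_filterlim. apply continuity_pt_minus. apply continuity_pt_filterlim; apply Hkc.
    apply (continuity_pt_comp u g t). apply Hucont. apply continuity_pt_filterlim; apply Hgc.
  - intros t. rewrite HDDu. ring.
Qed.
Lemma apriori (k g u : R -> R) (L K0 M eps : R) :
  0 < L -> 0 <= eps -> eps * (L * L) <= / 4 ->
  (forall t, Rabs (k t) <= K0) -> (forall x, Rabs (g x) <= M + eps * Rabs x) ->
  is_solution g k u -> odd_fun u -> periodic (2 * L) u ->
  forall t, Rabs (u t) <= 4 * (L * L * (K0 + M)).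
Proof.
  intros hL he heL Hk Hg [Hd1 [Hd2 Heq]] Ho Hp.
  set (A := L * L * (K0 + M)).
  assert (hA : 0 <= A).
  { unfold A. pose proof (Rabs_pos (k 0)). pose proof (Hk 0). pose proof (Hg 0). rewrite Rabs_R0 in H1.
    pose proof (Rabs_pos (g 0)). apply Rmult_le_pos; nra. }
  assert (u0 : u 0 = 0). { pose proof (Ho 0). rewrite Ropp_0 in H. lra. }
  assert (uL : u L = 0). { pose proof (Hp (- L)). replace (- L + 2 * L) with L in H by ring. rewrite Ho in H. lra. }
  assert (D1 : forall x, is_derive u x (Derive u x)) by (intros; apply Derive_correct; auto).
  assert (D2 : forall x, is_derive (Derive u) x (Derive (Derive u) x)) by (intros; apply Derive_correct; auto).
  assert (C1 : forall x, continuity_pt u x).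
  { intros x. apply derivable_continuous_pt. exists (Derive u x). apply is_derive_Reals. auto. }
  assert (C2 : forall x, continuity_pt (Derive u) x).
  { intros x. apply derivable_continuous_pt. exists (Derive (Derive u) x). apply is_derive_Reals. auto. }
  destruct (continuity_ab_maj (fun t => Rabs (u t)) 0 L ltac:(lra)) as [Mx [HMx hMx]].
  { intros c _. apply (continuity_pt_comp u Rabs c). auto. apply Rcontinuity_abs. }
  set (m := Rabs (u Mx)).
  assert (hm : 0 <= m) by apply Rabs_pos.
  set (F := K0 + M + eps * m).
  assert (HF : forall x, 0 <= x <= L -> Rabs (Derive (Derive u) x) <= F).
  { intros x hx. replace (Derive (Derive u) x) with (k x - g (u x)) by (pose proof (Heq x); lra).
    pose proof (Hk x). pose proof (Hg (u x)). pose proof (HMx x hx). simpl in H1. fold m in H1.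
    assert (eps * Rabs (u x) <= eps * m) by (apply Rmult_le_compat_l; auto).
    unfold F. eapply Rle_trans. apply Rabs_triang. rewrite Rabs_Ropp. lra. }
  assert (hF : 0 <= F) by (eapply Rle_trans; [apply Rabs_pos|apply (HF 0); lra]).
  destruct (MVT_gen u 0 L (Derive u)) as [c [hc hc2]].
  { intros; auto. } { intros; auto. }
  rewrite Rmin_left, Rmax_right in hc by lra.
  rewrite uL, u0 in hc2. assert (Dc : Derive u c = 0).
  { apply Rmult_eq_reg_r with L; [|lra]. lra. }
  assert (HD : forall x, 0 <= x <= L -> Rabs (Derive u x) <= L * F).
  { intros x hx. destruct (MVT_gen (Derive u) c x (Derive (Derive u))) as [xi [hxi hxi2]].
    { intros; auto. } { intros; auto. }
    assert (0 <= xi <= L).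
    { split. eapply Rle_trans; [|apply hxi]. apply Rmin_glb; lra. eapply Rle_trans; [apply hxi|]. apply Rmax_lub; lra. }
    rewrite Dc in hxi2. rewrite Rminus_0_r in hxi2. rewrite hxi2, Rabs_mult.
    assert (Rabs (x - c) <= L) by (apply Rabs_le_between; lra).
    rewrite Rmult_comm. apply Rmult_le_compat; try apply Rabs_pos; auto. }
  assert (HU : forall x, 0 <= x <= L -> Rabs (u x) <= A + m / 4).
  { intros x hx. destruct (MVT_gen u 0 x (Derive u)) as [eta [heta heta2]].
    { intros; auto. } { intros; auto. }
    rewrite Rmin_left, Rmax_right in heta by lra.
    rewrite u0, Rminus_0_r, Rminus_0_r in heta2. rewrite heta2, Rabs_mult.
    pose proof (HD eta ltac:(lra)).
    rewrite (Rabs_right x) by lra.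
    apply Rle_trans with (L * F * L). apply Rmult_le_compat; try apply Rabs_pos; lra.
    unfold F, A. assert (L * (eps * m) * L = eps * (L * L) * m) by ring.
    assert (eps * (L * L) * m <= / 4 * m) by (apply Rmult_le_compat_r; auto). nra. }
  assert (hmA : m <= 4 * A) by (pose proof (HU Mx hMx); fold m in H; lra).
  assert (HUL : forall x, 0 <= x <= L -> Rabs (u x) <= 4 * A).
  { intros x hx. pose proof (HMx x hx). simpl in H. fold m in H. lra. }
  intros t. destruct (reduce_R u (2 * L) ltac:(lra) Hp t) as [hr ->].
  set (r := t - IZR (Zfloor (t / (2 * L))) * (2 * L)) in *.
  destruct (Rle_dec r L). apply HUL; lra.
  replace (u r) with (u (r - 2 * L)) by (rewrite <- (Hp (r - 2 * L)); f_equal; ring).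
  replace (r - 2 * L) with (- (2 * L - r)) by ring. rewrite Ho, Rabs_Ropp. apply HUL. lra.
Qed.
Theorem theorem1 (T : R) (g k : R -> R) :
  0 < T ->
  (forall x, continuous g x) -> odd_fun g -> sublinear g ->
  (forall t, continuous k t) -> odd_fun k -> periodic T k ->
  / T * RInt k 0 T = 0 ->
  (exists u : R -> R, is_C2_solution g k u /\ odd_fun u /\ periodic T u) /\
  (exists B : R, forall u : R -> R,
      is_solution g k u -> odd_fun u -> periodic T u ->
      forall t, Rabs (u t) <= B).
Proof.
  intros hT Hgc Hgo Hgs Hkc Hko Hkp _.
  set (L := T / 2).
  assert (hL : 0 < L) by (unfold L; lra).
  assert (hTL : T = 2 * L) by (unfold L; field).
  rewrite hTL in Hkp |- *.
  destruct (continuity_ab_maj (fun t => Rabs (k t)) 0 (2 * L) ltac:(lra)) as [Mx [HMx _]].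
  { intros c _. apply (continuity_pt_comp k Rabs c). apply continuity_pt_filterlim; apply Hkc. apply Rcontinuity_abs. }
  set (K0 := Rabs (k Mx)).
  assert (Hk : forall t, Rabs (k t) <= K0).
  { intros t. destruct (reduce_R k (2 * L) ltac:(lra) Hkp t) as [hr ->]. apply HMx. auto. }
  set (eps := / (4 * (L * L))).
  assert (he : 0 < eps) by (unfold eps; apply Rinv_0_lt_compat; nra).
  assert (heL : eps * (L * L) <= / 4) by (unfold eps; right; field; lra).
  destruct (Hgs eps he) as [M [hM Hg]].
  set (A := L * L * (K0 + M)).
  assert (hK0 : 0 <= K0) by apply Rabs_pos.
  assert (hA : 0 <= A) by (unfold A; apply Rmult_le_pos; nra).
  split.
  - set (Fb := K0 + M + eps * (4 * A)).
    set (Db := 2 * A / L + 2 * L * Fb).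
    assert (hFb : 0 <= Fb) by (unfold Fb; nra).
    assert (hDb : 0 <= Db) by (unfold Db; assert (0 <= 2 * A / L) by (apply Rdiv_le_0_compat; lra); nra).
    set (Prop_n := fun (n : nat) (U : Z -> R) =>
      (forall z, U (z + 1)%Z - 2 * U z + U (z - 1)%Z = (L / INR (S n)) * (L / INR (S n)) * (k (IZR z * (L / INR (S n))) - g (U z))) /\
      (forall z, U (- z)%Z = - U z) /\
      (forall z, U (z + 2 * Z.of_nat (S n))%Z = U z) /\
      (forall z, Rabs (U z) <= 4 * A) /\
      (forall z, Rabs (U (z + 1)%Z - U z) <= (L / INR (S n)) * Db)).
    set (Uf := fun n => epsilon (inhabits (fun _ : Z => 0)) (Prop_n n)).
    assert (HU : forall n, Prop_n n (Uf n)).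
    { intros n. unfold Uf. apply epsilon_spec.
      apply (disc_pkg k g L K0 M eps (S n) hL ltac:(lia) (Rlt_le _ _ he) heL Hgc Hk Hg Hko Hgo Hkp). }
    destruct (limit_sol k g L (4 * A) Db Fb Uf hL hDb hFb Hgc Hkc) as [u Hu].
    + intros n. apply HU.
    + intros n. apply HU.
    + intros n. apply HU.
    + intros n. apply HU.
    + intros n. apply HU.
    + intros n z. destruct (HU n) as [_ [_ [_ [h4 _]]]].
      pose proof (Hk (IZR z * (L / INR (S n)))). pose proof (Hg (Uf n z)). pose proof (h4 z).
      assert (eps * Rabs (Uf n z) <= eps * (4 * A)) by (apply Rmult_le_compat_l; lra).
      unfold Fb. eapply Rle_trans. apply Rabs_triang. rewrite Rabs_Ropp. lra.
    + exists u. exact Hu.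
  - exists (4 * A). intros u Hs Ho Hp t.
    apply (apriori k g u L K0 M eps hL (Rlt_le _ _ he) heL Hk Hg Hs Ho Hp).
Qed.
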